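(* Let $M^Q(a|x)$ and $N^{Q'}(b|y)$ be any two simple PMDs, possibly on different Hilbert spaces $\mathcal{H}^Q$, $\mathcal{H}^{Q'}$ and with arbitrary finite program and outcome sets. Then both $M^Q(a|x)\succeq N^{Q'}(b|y)$ and $N^{Q'}(b|y)\succeq M^Q(a|x)$ hold.
   Context: All Hilbert spaces are finite-dimensional and all alphabets are finite. A PMD on $\mathcal{H}^Q$ with program set $\mathcal{X}$ and outcome set $\mathcal{A}$ is a family $\{M^Q(a|x)\}$ of operators on $\mathcal{H}^Q$ with $M^Q(a|x)\ge0$ and $\sum_a M^Q(a|x)=\mathbb{1}^Q$ for every $x$. A PMD is simple (i.e. a compatible family of POVMs) if there exist a POVM $\{\tilde M^Q(i)\}_{i\in\mathcal{I}}$ on $\mathcal{H}^Q$ and a conditional probability distribution $p(a|i,x)$ with $M^Q(a|x)=\sum_i p(a|i,x)\tilde M^Q(i)$ for all $a,x$. $M^Q(a|x)\succeq N^{Q'}(b|y)$ means that there exist a probability distribution $\mu(r)$, for each $r$ a quantum instrument $\{\mathcal{E}^{Q'\to Q}_{i|r}\}_i$, and conditional probability distributions $p(x|i,y,r)$, $q(b|a,x,i,y,r)$ such that for all $b,y$ \[N^{Q'}(b|y)=\sum_r\mu(r)\sum_{i,x,a}q(b|a,x,i,y,r)\,p(x|i,y,r)\,(\mathcal{E}^{Q'\to Q}_{i|r})^\dagger[M^Q(a|x)],\] with $\mathcal{E}^\dagger$ the adjoint (trace-dual) map. *)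

(* Defs.v *)
From HB Require Import structures.
From mathcomp Require Import all_boot all_order all_algebra all_field.
Set Implicit Arguments. Unset Strict Implicit. Unset Printing Implicit Defensive.
Import Order.TTheory GRing.Theory Num.Theory.
Local Open Scope ring_scope.

(* Operators on H^Q (dim d) are complex d x d matrices over algC. *)

Definition adjmx (m n : nat) (A : 'M[algC]_(m, n)) : 'M[algC]_(n, m) :=
  (map_mx Num.conj A)^T.

Definition psd (d : nat) (A : 'M[algC]_d) : Prop :=
  forall v : 'cV[algC]_d, 0 <= (adjmx v *m A *m v) ord0 ord0.

Definition is_prob (T : finType) (f : T -> algC) : Prop :=
  (forall t, 0 <= f t) /\ \sum_t f t = 1.

Definition is_POVM (d : nat) (I : finType) (F : I -> 'M[algC]_d) : Prop :=
  (forall i, psd (F i)) /\ \sum_i F i = 1%:M.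

(* PMD {M(a|x)} : M a x = M(a|x) *)
Definition is_PMD (d : nat) (X A : finType) (M : A -> X -> 'M[algC]_d) : Prop :=
  (forall a x, psd (M a x)) /\ (forall x, \sum_a M a x = 1%:M).

Definition simple_PMD (d : nat) (X A : finType) (M : A -> X -> 'M[algC]_d) : Prop :=
  exists (I : finType) (F : I -> 'M[algC]_d) (p : A -> I -> X -> algC),
    is_POVM F /\ (forall i x, is_prob (fun a => p a i x)) /\
    (forall a x, M a x = \sum_i p a i x *: F i).

Definition is_linear_map (d1 d2 : nat) (E : 'M[algC]_d1 -> 'M[algC]_d2) : Prop :=
  forall (c : algC) (u v : 'M[algC]_d1), E (c *: u + v) = c *: E u + E v.

(* positivity of an n x n block matrix with d x d blocks B i j *)
Definition block_psd (n d : nat) (B : 'I_n -> 'I_n -> 'M[algC]_d) : Prop :=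
  forall v : 'I_n -> 'cV[algC]_d,
    0 <= \sum_i \sum_j (adjmx (v i) *m B i j *m v j) ord0 ord0.

(* complete positivity: id_n (x) E is positive for every n *)
Definition completely_positive (d1 d2 : nat) (E : 'M[algC]_d1 -> 'M[algC]_d2) : Prop :=
  forall (n : nat) (B : 'I_n -> 'I_n -> 'M[algC]_d1),
    block_psd B -> block_psd (fun i j => E (B i j)).

Definition is_instrument (d1 d2 : nat) (I : finType)
    (E : I -> 'M[algC]_d1 -> 'M[algC]_d2) : Prop :=
  (forall i, is_linear_map (E i) /\ completely_positive (E i)) /\
  (forall rho : 'M[algC]_d1, \tr (\sum_i E i rho) = \tr rho).

(* trace-dual (adjoint) map: tr(E^dag(M) rho) = tr(M E(rho)) *)
Definition dual_map (d1 d2 : nat) (E : 'M[algC]_d1 -> 'M[algC]_d2)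
    (M : 'M[algC]_d2) : 'M[algC]_d1 :=
  \matrix_(k, l) \tr (M *m E (delta_mx l k)).

Definition simulates (d d' : nat) (X A Y B : finType)
    (M : A -> X -> 'M[algC]_d) (N : B -> Y -> 'M[algC]_d') : Prop :=
  exists (R : finType) (mu : R -> algC) (I : finType)
         (E : R -> I -> 'M[algC]_d' -> 'M[algC]_d)
         (p : X -> I -> Y -> R -> algC)
         (q : B -> A -> X -> I -> Y -> R -> algC),
    is_prob mu /\
    (forall r, is_instrument (E r)) /\
    (forall i y r, is_prob (fun x => p x i y r)) /\
    (forall a x i y r, is_prob (fun b => q b a x i y r)) /\
    (forall b y, N b y =
       \sum_r mu r *: \sum_i \sum_x \sum_a
          (q b a x i y r * p x i y r) *: dual_map (E r i) (M a x)).

(* Main.v *)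
Require Import Defs.
From mathcomp Require Import all_boot all_order all_algebra all_field.
From mathcomp Require Import ring sesquilinear spectral.
Set Implicit Arguments. Unset Strict Implicit. Unset Printing Implicit Defensive.
Import Order.TTheory GRing.Theory Num.Theory.
Local Open Scope ring_scope.

Lemma adjmx_mul m n p (A : 'M[algC]_(m,n)) (B : 'M_(n,p)) :
  adjmx (A *m B) = adjmx B *m adjmx A.
Proof. by rewrite /adjmx map_mxM trmx_mul. Qed.
Lemma adjmxK m n (A : 'M[algC]_(m,n)) : adjmx (adjmx A) = A.
Proof. by apply/matrixP=> i j; rewrite !mxE conjCK. Qed.
Lemma adjmxD m n (A B : 'M[algC]_(m,n)) : adjmx (A + B) = adjmx A + adjmx B.
Proof. by apply/matrixP=> i j; rewrite !mxE rmorphD. Qed.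
Lemma adjmxZ m n c (A : 'M[algC]_(m,n)) : adjmx (c *: A) = c^* *: adjmx A.
Proof. by apply/matrixP=> i j; rewrite !mxE rmorphM. Qed.
Lemma adjmx_delta m n (i : 'I_m) (j : 'I_n) :
  adjmx (delta_mx i j : 'M[algC]_(m,n)) = delta_mx j i.
Proof. by apply/matrixP=> k l; rewrite !mxE rmorph_nat andbC. Qed.

Definition fm n (u : 'cV[algC]_n) (A : 'M_n) (v : 'cV_n) := (adjmx u *m A *m v) ord0 ord0.

Lemma fmDl n (u u' v : 'cV[algC]_n) A : fm (u + u') A v = fm u A v + fm u' A v.
Proof. by rewrite /fm adjmxD !mulmxDl mxE. Qed.
Lemma fmDr n (u v v' : 'cV[algC]_n) A : fm u A (v + v') = fm u A v + fm u A v'.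
Proof. by rewrite /fm !mulmxDr mxE. Qed.
Lemma fmZl n c (u v : 'cV[algC]_n) A : fm (c *: u) A v = c^* * fm u A v.
Proof. by rewrite /fm adjmxZ -!scalemxAl mxE. Qed.
Lemma fmZr n c (u v : 'cV[algC]_n) A : fm u A (c *: v) = c * fm u A v.
Proof. by rewrite /fm -!scalemxAr mxE. Qed.

Lemma psd_real n (A : 'M[algC]_n) v : psd A -> fm v A v \is Num.real.
Proof. by move=> h; apply: ger0_real; apply: h. Qed.

Lemma psd_herm n (A : 'M[algC]_n) : psd A -> forall u v, fm v A u = (fm u A v)^*.
Proof.
move=> hA u v.
set a := fm u A v; set b := fm v A u.
have h1 : a + b \is Num.real.
  have := realB (realB (psd_real (u + v) hA) (psd_real u hA)) (psd_real v hA).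
  by rewrite fmDl !fmDr /a /b; congr (_ \is _); ring.
have h2 : 'i * b - 'i * a \is Num.real.
  have := realB (realB (psd_real ('i *: u + v) hA) (psd_real u hA)) (psd_real v hA).
  rewrite fmDl !fmDr !fmZl !fmZr conjCi /a /b.
  have -> : - 'i * ('i * fm u A u) = fm u A u by rewrite mulrA mulNr -expr2 sqrCi; ring.
  by congr (_ \is _); ring.
move/CrealP: h1; move/CrealP: h2.
  rewrite rmorphB !rmorphM rmorphD /= conjCi => e2 e1.
have e2' : b^* - a^* = a - b.
  apply: (mulfI (neq0Ci algC)); transitivity (-( -'i * b^* - -'i * a^*)); first ring. by rewrite e2; ring.
have : (b - a^*) *+ 2 = 0.
  rewrite mulr2n; apply/eqP; rewrite -[_ == 0]/(_) .
  apply/eqP.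
  have : (a^* + b^*) - (b^* - a^*) = (a + b) - (a - b) by rewrite e1 e2'.
  move=> e; transitivity ((a + b - (a - b)) - (a ^* + b ^* - (b ^* - a ^*))); first by ring.
  by rewrite e subrr.
by move/eqP; rewrite mulrn_eq0 /= subr_eq0 => /eqP.
Qed.

Lemma fm_delta n (G : 'M[algC]_n) a b : fm (delta_mx a 0) G (delta_mx b 0) = G a b.
Proof. by rewrite /fm adjmx_delta -rowE -colE !mxE. Qed.

Lemma psd_adj n (G : 'M[algC]_n) : psd G -> adjmx G = G.
Proof.
move=> hG; apply/matrixP=> i j.
by rewrite [in LHS]mxE [in LHS]mxE -[G j i]fm_delta -psd_herm // fm_delta.
Qed.

Lemma adjmx_tstar m n (A : 'M[algC]_(m,n)) : adjmx A = (A ^t* )%sesqui.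
Proof. by rewrite /adjmx map_trmx. Qed.

Definition wdec n (G : 'M[algC]_n) (k : 'I_n) : 'cV_n :=
  sqrtC (spectral_diag G 0 k) *: (adjmx (spectralmx G) *m delta_mx k 0).

Lemma psd_decomp n (G : 'M[algC]_n) : psd G ->
  G = \sum_k wdec G k *m adjmx (wdec G k).
Proof.
move=> hG.
have hn : G \is normalmx.
  by apply/normalmxP; rewrite -adjmx_tstar psd_adj.
set P := spectralmx G; set D := spectral_diag G.
have hP : P *m adjmx P = 1%:M.
  by rewrite adjmx_tstar; apply/unitarymxP; apply: spectral_unitarymx.
have eG : G = adjmx P *m diag_mx D *m P.
  by rewrite adjmx_tstar -invmx_unitary ?spectral_unitarymx //; apply/orthomx_spectralP.
have hD : forall k, 0 <= D 0 k.
  move=> k; have := hG (adjmx P *m delta_mx k 0).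
  rewrite eG adjmx_mul adjmxK adjmx_delta.
  rewrite /fm !mulmxA -(mulmxA _ P) hP mulmx1 -(mulmxA _ P) hP mulmx1.
  by rewrite -rowE -colE !mxE eqxx mulr1n.
rewrite [LHS]eG diag_mx_sum_delta mulmx_sumr mulmx_suml; apply: eq_bigr => k _.
rewrite /wdec -/P -/D adjmxZ adjmx_mul adjmxK adjmx_delta.
rewrite -!scalemxAl -!scalemxAr -?scalemxAl scalerA (conj_Creal (sqrtC_real (hD k))) -expr2 sqrtCK.
by rewrite !mulmxA -(mulmxA _ (delta_mx k 0)) mul_delta_mx.
Qed.

Lemma fm_delta00 m (u v : 'cV[algC]_m.+1) t :
  (adjmx u *m (t *: delta_mx 0 0) *m v) 0 0 = t * ((u 0 0)^* * v 0 0).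
Proof.
rewrite -scalemxAr -scalemxAl mxE; congr (_ * _).
rewrite -(mul_delta_mx (0 : 'I_1)) mulmxA -colE -mulmxA -rowE mxE big_ord1 !mxE.
by [].
Qed.

Lemma tr_rank1 n (w : 'cV[algC]_n) B : \tr (w *m adjmx w *m B) = fm w B w.
Proof. by rewrite -mulmxA mxtrace_mulC trace_mx11. Qed.

Lemma tr_delta00 m : \tr (delta_mx 0 0 : 'M[algC]_m.+1) = 1.
Proof.
rewrite -(mul_delta_mx (0 : 'I_1)) mxtrace_mulC mul_delta_mx trace_mx11 mxE.
by rewrite !eqxx.
Qed.

Lemma tr_mul_delta n (G : 'M[algC]_n) k l : \tr (G *m delta_mx l k) = G k l.
Proof.
rewrite -(mul_delta_mx (0 : 'I_1)) mulmxA -colE mxtrace_mulC -rowE trace_mx11.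
by rewrite !mxE.
Qed.

Definition Emap n m (G : 'M[algC]_n) (rho : 'M[algC]_n) : 'M[algC]_m.+1 :=
  \tr (G *m rho) *: delta_mx 0 0.

Lemma Emap_linear n m (G : 'M[algC]_n) : is_linear_map (@Emap n m G).
Proof.
move=> c u v; rewrite /Emap mulmxDr -scalemxAr mxtraceD mxtraceZ scalerDl scalerA.
by [].
Qed.

Lemma Emap_cp n m (G : 'M[algC]_n) : psd G -> completely_positive (@Emap n m G).
Proof.
move=> hG k B hB v.
have ->: \sum_i \sum_j (adjmx (v i) *m Emap m G (B i j) *m v j) 0 0 =
   \sum_l \sum_i \sum_j fm ((v i 0 0) *: wdec G l) (B i j) ((v j 0 0) *: wdec G l).
  symmetry; rewrite exchange_big; apply: eq_bigr => i _; rewrite exchange_big.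
  apply: eq_bigr => j _; rewrite /Emap fm_delta00. rewrite [in RHS](psd_decomp hG) mulmx_suml raddf_sum.
  rewrite mulr_suml; apply: eq_bigr => l _. rewrite /= tr_rank1 fmZl fmZr; ring.
by apply: sumr_ge0 => l _; apply: hB.
Qed.

Lemma Emap_dual n m (G : 'M[algC]_n) (M : 'M[algC]_m.+1) :
  dual_map (@Emap n m G) M = \tr (M *m delta_mx 0 0) *: G.
Proof.
apply/matrixP => k l; rewrite !mxE /Emap -scalemxAr mxtraceZ tr_mul_delta mulrC.
by [].
Qed.

Lemma sim_main (d d' : nat) (X A Y B : finType)
    (M : A -> X -> 'M[algC]_d.+1) (N : B -> Y -> 'M[algC]_d'.+1) (x0 : X) :
  is_PMD M -> simple_PMD N -> simulates M N.
Proof.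
case=> _ HM [I [G [pN [[HGpsd HGsum] [HpN HN]]]]].
exists unit, (fun _ => 1), I, (fun _ j => @Emap d'.+1 d (G j)),
  (fun x _ _ _ => (x == x0)%:R), (fun b _ _ j y _ => pN b j y).
split.
  split=> [_|]; first exact: ler01.
  by rewrite (big_pred1 tt) // => -[].
split.
  move=> _; split.
    by move=> j; split; [apply: Emap_linear | apply: Emap_cp].
  move=> rho; rewrite raddf_sum /=.
  under eq_bigr => j _ do rewrite /Emap mxtraceZ tr_delta00 mulr1.
  by rewrite -raddf_sum -mulmx_suml HGsum mul1mx.
split.
  move=> _ _ _; split=> [x|]; first by rewrite ler0n.
  rewrite (bigD1 x0) //= eqxx big1 ?addr0 // => x /negbTE ->; by [].
split; first by move=> a x j y _; apply: HpN.
move=> b y; rewrite (big_pred1 tt) ?scale1r; last by case.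
rewrite HN; apply: eq_bigr => j _.
rewrite (bigD1 x0) //= [X in _ + X]big1 ?addr0; last first.
  by move=> x nx; apply: big1 => a _; rewrite (negbTE nx) mulr0 scale0r.
under eq_bigr => a _ do rewrite eqxx mulr1 Emap_dual scalerA.
rewrite -scaler_suml -mulr_sumr; congr (_ *: _).
by rewrite -raddf_sum -mulmx_suml HM mul1mx /= tr_delta00 mulr1.
Qed.

Theorem lemma1 (d d' : nat) (X A Y B : finType)
    (M : A -> X -> 'M[algC]_d.+1) (N : B -> Y -> 'M[algC]_d'.+1)
    (x0 : X) (y0 : Y) :
  is_PMD M -> is_PMD N -> simple_PMD M -> simple_PMD N ->
  simulates M N /\ simulates N M.
Proof.
move=> hM hN sM sN; split; [exact: sim_main x0 hM sN | exact: sim_main y0 hN sM].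
Qed.
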